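(* Let $P\subset\mathbb{H}^4$ be the regular right-angled compact hyperbolic $120$-cell. A maximum set of pairwise disjoint walls of $P$ has $24$ elements.
   Context: Use the hyperboloid model $\mathbb{H}^4=\{x\in\mathbb{R}^5:(x,x)=-1,x_0>0\}$ with Minkowski form $(x,y)=-x_0y_0+\sum_{i=1}^4x_iy_i$. The hyperbolic $120$-cell $P$ is the compact regular convex polytope in $\mathbb{H}^4$ with $120$ dodecahedral walls ($3$-dimensional faces), any two intersecting walls meeting at right angles; it is bounded by the $120$ hyperplanes $\vec n^\perp\cap\mathbb{H}^4$ where, with $\tau=(1+\sqrt5)/2$, $\vec n$ ranges over: the $8$ vectors obtained by permuting the last four coordinates of $(\sqrt{2\tau},\pm2,0,0,0)$; the $16$ vectors $(\sqrt{2\tau},\pm1,\pm1,\pm1,\pm1)$; and the $96$ vectors obtained by even permutations of the last four coordinates of $(\sqrt{2\tau},\pm\tau,\pm1,\pm\tau^{-1},0)$. Two walls are disjoint if they do not intersect in $\mathbb{H}^4$. Each wall meets exactly $12$ other walls. *)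

(* Defs.v *)
From HB Require Import structures.
From mathcomp Require Import all_boot all_order all_algebra.
From mathcomp Require Import reals.
Set Implicit Arguments. Unset Strict Implicit. Unset Printing Implicit Defensive.
Import Order.TTheory GRing.Theory Num.Theory.
Local Open Scope ring_scope.

Section C120.
Variable R : realType.

Definition tau : R := (1 + Num.sqrt 5) / 2.

Definition mink (x y : 'I_5 -> R) : R :=
  - x ord0 * y ord0 + \sum_(i < 4) x (lift ord0 i) * y (lift ord0 i).

Definition inH4 (x : 'I_5 -> R) : Prop := mink x x = -1 /\ 0 < x ord0.

Definition signs : seq R := [:: 1; -1].

(* the 12 even permutations of {0,1,2,3} *)
Definition evenperms : seq (seq nat) :=
  [:: [:: 0; 1; 2; 3]%N; [:: 0; 2; 3; 1]%N; [:: 0; 3; 1; 2]%N; [:: 1; 0; 3; 2]%N;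
      [:: 1; 2; 0; 3]%N; [:: 1; 3; 2; 0]%N; [:: 2; 0; 1; 3]%N; [:: 2; 1; 3; 0]%N;
      [:: 2; 3; 0; 1]%N; [:: 3; 0; 2; 1]%N; [:: 3; 1; 0; 2]%N; [:: 3; 2; 1; 0]%N].

(* last four coordinates of the 120 normal vectors *)
Definition spatial1 : seq (seq R) :=
  flatten [seq [seq [seq (if k == p then e * 2 else 0) | k <- iota 0 4] | e <- signs]
          | p <- iota 0 4].
Definition spatial2 : seq (seq R) :=
  flatten (flatten (flatten
    [seq [seq [seq [seq [:: a; b; c; d] | d <- signs] | c <- signs] | b <- signs]
    | a <- signs])).
Definition spatial3 : seq (seq R) :=
  flatten (flatten (flatten
    [seq [seq [seq [seq [seq nth 0 [:: a * tau; b; c * tau^-1; 0] j | j <- pi]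
                   | c <- signs] | b <- signs] | a <- signs] | pi <- evenperms])).
Definition spatials : seq (seq R) := spatial1 ++ spatial2 ++ spatial3.

Definition normal (i : 'I_120) : 'I_5 -> R :=
  fun k => if k == ord0 then Num.sqrt (2 * tau)
           else nth 0 (nth [::] spatials i) k.-1.

(* the 120-cell P: the side of every hyperplane containing (1,0,0,0,0) *)
Definition inP (x : 'I_5 -> R) : Prop :=
  inH4 x /\ forall i : 'I_120, mink x (normal i) <= 0.

Definition in_wall (i : 'I_120) (x : 'I_5 -> R) : Prop :=
  inP x /\ mink x (normal i) = 0.

Definition disjoint_walls (i j : 'I_120) : Prop :=
  ~ exists x, in_wall i x /\ in_wall j x.

Definition pairwise_disjoint_walls (S : {set 'I_120}) : Prop :=
  forall i j, i \in S -> j \in S -> i != j -> disjoint_walls i j.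

End C120.

(* Main.v *)
Set Warnings "-notation-overridden,-ambiguous-paths,-notation-incompatible-prefix".
Require Import Defs.
From HB Require Import structures.
From mathcomp Require Import all_boot all_order all_algebra.
From mathcomp Require Import reals.
Set Implicit Arguments. Unset Strict Implicit. Unset Printing Implicit Defensive.
Import Order.TTheory GRing.Theory Num.Theory.
Local Open Scope ring_scope.

Definition zt := (int * int)%type.
Definition addZ (x y : zt) : zt := (x.1 + y.1, x.2 + y.2).
Definition mulZ (x y : zt) : zt := (x.1 * y.1 + x.2 * y.2, x.1 * y.2 + x.2 * y.1 + x.2 * y.2).
Definition z0 : zt := (0, 0).
Definition signsZ : seq zt := [:: (1, 0); (-1, 0)].
Definition spatial1Z : seq (seq zt) :=
  flatten [seq [seq [seq (if k == p then mulZ e (2,0) else z0) | k <- iota 0 4] | e <- signsZ]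
          | p <- iota 0 4].
Definition spatial2Z : seq (seq zt) :=
  flatten (flatten (flatten
    [seq [seq [seq [seq [:: a; b; c; d] | d <- signsZ] | c <- signsZ] | b <- signsZ]
    | a <- signsZ])).
Definition spatial3Z : seq (seq zt) :=
  flatten (flatten (flatten
    [seq [seq [seq [seq [seq nth z0 [:: mulZ a (0,1); b; mulZ c (-1,1); z0] j | j <- pi]
                   | c <- signsZ] | b <- signsZ] | a <- signsZ] | pi <- evenperms])).
Definition spZ : seq (seq zt) := spatial1Z ++ spatial2Z ++ spatial3Z.

Definition dotZ (u v : seq zt) : zt :=
  addZ (mulZ (nth z0 u 0) (nth z0 v 0)) (addZ (mulZ (nth z0 u 1) (nth z0 v 1))
   (addZ (mulZ (nth z0 u 2) (nth z0 v 2)) (mulZ (nth z0 u 3) (nth z0 v 3)))).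
Definition dZt (T : seq (seq zt)) (i j : nat) : zt := dotZ (nth [::] T i) (nth [::] T j).
Definition dZ := dZt spZ.

Definition vals' : seq zt := [:: (0,2); (2,0); (-2,2); (0,0); (2,-2); (-2,0); (0,-2); (-4,0)].

Definition nbt T (v : nat) : seq nat := filter (fun j => dZt T v j == (0,2)) (iota 0 120).
Definition adjtabt T : seq (seq nat) := [seq nbt T v | v <- iota 0 120].

Definition adjT (T : seq (seq nat)) (a b : nat) : bool := b \in nth [::] T a.
Definition chk4d T v a b c : bool :=
  all (fun d => [|| d == a, d == b, d == c, adjT T a d, adjT T b d | adjT T c d]) (nth [::] T v).
Definition chk4c T v a b : bool :=
  all (fun c => if [|| c == a, c == b, adjT T a c | adjT T b c] then true else chk4d T v a b c) (nth [::] T v).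
Definition chk4b T v a : bool :=
  all (fun b => if (a == b) || adjT T a b then true else chk4c T v a b) (nth [::] T v).
Definition chk4v T v : bool := all (chk4b T v) (nth [::] T v).
Definition chk4 (T : seq (seq nat)) : bool := all (chk4v T) (iota 0 120).

Definition chkall (S : seq (seq zt)) : bool :=
  let T := adjtabt S in
  [&& size S == 120%N, chk4 T,
      all (fun i => dZt S i i == (4,0)) (iota 0 120),
      all (fun i => all (fun j => (i == j) || (dZt S i j \in vals')) (iota 0 120)) (iota 0 120),
      all (fun i => size (nth [::] T i) == 12%N) (iota 0 120) &
      all (fun i => all (fun j => (i == j) || (dZt S i j != (0,2))) (iota 0 24)) (iota 0 24)].


Lemma chkall_ok : chkall spZ. Proof. vm_compute; reflexivity. Qed.
Lemma mem_iota120 (i : 'I_120) : (nat_of_ord i \in iota 0 120).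
Proof. by rewrite mem_iota /= ltn_ord. Qed.

Lemma dZdiag (i : 'I_120) : dZ i i = (4,0).
Proof.
have := chkall_ok; rewrite /chkall => /and5P [_ _ /allP h _ _].
by apply/eqP; apply: h; apply: mem_iota120.
Qed.

Lemma dZoff (i j : 'I_120) : i != j -> dZ i j \in vals'.
Proof.
have := chkall_ok; rewrite /chkall => /and5P [_ _ _ /allP h _] ne.
have := h _ (mem_iota120 i) => /allP /(_ _ (mem_iota120 j)).
have ne' : (nat_of_ord i == nat_of_ord j) = false by exact: negbTE ne.
by rewrite ne'.
Qed.

Definition adjO (i j : 'I_120) : bool := dZ i j == (0,2).
Arguments adjO : simpl never.

Lemma nth_adjtab (a : nat) : (a < 120)%N -> nth [::] (adjtabt spZ) a = nbt spZ a.
Proof. move=> h; rewrite /adjtabt (nth_map 0%N); last by rewrite size_iota. by rewrite nth_iota. Qed.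

Lemma memT (a b : 'I_120) : (nat_of_ord b \in nth [::] (adjtabt spZ) a) = adjO a b.
Proof. by rewrite nth_adjtab // mem_filter mem_iota /= ltn_ord andbT. Qed.

Lemma enum_filter (T : finType) (P : pred T) : enum P = filter P (enum T).
Proof. rewrite /enum_mem -filter_predI. apply: eq_filter => x /=. by rewrite andbT. Qed.

Lemma degO (i : 'I_120) : #|[set j | adjO i j]| = 12%N.
Proof.
have := chkall_ok; rewrite /chkall => /and5P [_ _ _ _ /andP [/allP h _]].
have := h _ (mem_iota120 i); rewrite nth_adjtab // => /eqP hs.
transitivity (size (nbt spZ i)); last exact: hs.
rewrite cardsE cardE enum_filter size_filter /nbt size_filter -val_enum_ord (count_map val).
by apply: eq_count => x.
Qed.

Lemma chk24O (i j : 'I_120) : (i < 24)%N -> (j < 24)%N -> i != j -> ~~ adjO i j.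
Proof.
move=> hi hj ne.
have := chkall_ok; rewrite /chkall => /and5P [_ _ _ _ /andP [_ /allP h]].
have hi' : nat_of_ord i \in iota 0 24 by rewrite mem_iota.
have hj' : nat_of_ord j \in iota 0 24 by rewrite mem_iota.
have := h _ hi' => /allP /(_ _ hj').
have ne' : (nat_of_ord i == nat_of_ord j) = false by exact: negbTE ne.
by rewrite ne'.
Qed.

Lemma chk4E T : chk4 T = all (chk4v T) (iota 0 120). Proof. by []. Qed.

Lemma F4gen (T : seq (seq nat)) (v a b c d : nat) : chk4v T v ->
  a \in nth [::] T v -> b \in nth [::] T v -> c \in nth [::] T v -> d \in nth [::] T v ->
  uniq [:: a; b; c; d] ->
  [|| adjT T a b, adjT T a c, adjT T a d, adjT T b c, adjT T b d | adjT T c d].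
Proof.
move=> h va vb vc vd u.
move: u => /and4P [h1 h2 h3 _].
move: h1 h2 h3; rewrite !inE !negb_or => /and3P [ab ac ad] /andP [bc bd] cd.
move: h; rewrite /chk4v => /allP /(_ _ va).
rewrite /chk4b => /allP /(_ _ vb).
rewrite (negbTE ab) /=.
case: (adjT T a b) => //=.
rewrite /chk4c => /allP /(_ _ vc).
rewrite eq_sym (negbTE ac) eq_sym (negbTE bc) /=.
case: (adjT T a c) => //=; case: (adjT T b c) => //=; rewrite ?orbT //=.
rewrite /chk4d => /allP /(_ _ vd).
rewrite eq_sym (negbTE ad) eq_sym (negbTE bd) eq_sym (negbTE cd) /=.
by case: (adjT T a d); case: (adjT T b d); case: (adjT T c d); rewrite ?orbT.
Qed.

Lemma adjTO (a b : 'I_120) : adjT (adjtabt spZ) a b = adjO a b.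
Proof. exact: memT. Qed.

Lemma F4 (v a b c d : 'I_120) : adjO v a -> adjO v b -> adjO v c -> adjO v d ->
  uniq [:: a; b; c; d] -> [|| adjO a b, adjO a c, adjO a d, adjO b c, adjO b d | adjO c d].
Proof.
move=> va vb vc vd u.
have := chkall_ok; rewrite /chkall => /and5P [_ h _ _ _].
rewrite chk4E in h; move/allP: h => h.
have m x y : adjO x y -> (nat_of_ord y \in nth [::] (adjtabt spZ) x) by rewrite memT.
have u' : uniq (map (@nat_of_ord 120) [:: a; b; c; d]).
  by rewrite map_inj_uniq //; exact: val_inj.
have := F4gen (h _ (mem_iota120 v)) (m _ _ va) (m _ _ vb) (m _ _ vc) (m _ _ vd) u'.
by rewrite !adjTO.
Qed.

From mathcomp Require Import ring lra.
Section Real.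
Variable R : realType.
Local Notation tau := (tau R).

Lemma s5 : Num.sqrt (5:R) ^+ 2 = 5.
Proof. by rewrite sqr_sqrtr // ler0n. Qed.
Lemma s5ge0 : 0 <= Num.sqrt (5:R). Proof. exact: sqrtr_ge0. Qed.
Lemma s5gt2 : 2 < Num.sqrt (5:R).
Proof. have := s5; have := s5ge0; nra. Qed.
Lemma s5lt3 : Num.sqrt (5:R) < 3.
Proof. have := s5; have := s5ge0; nra. Qed.
Lemma tau2 : tau ^+ 2 = tau + 1.
Proof. rewrite /Defs.tau. have h := s5. rewrite expr2 in h.
rewrite expr2. have -> : (1 + Num.sqrt (5:R)) / 2 * ((1 + Num.sqrt 5) / 2) = (1 + 2 * Num.sqrt 5 + Num.sqrt 5 * Num.sqrt 5) / 4 by field.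
rewrite h; by field. Qed.
Lemma tau_gt : 3/2 < tau. Proof. rewrite /Defs.tau; have := s5gt2; lra. Qed.
Lemma tau_lt : tau < 2. Proof. rewrite /Defs.tau; have := s5lt3; lra. Qed.
Lemma tauV : tau^-1 = tau - 1.
Proof.
have h0 : tau != 0 by rewrite gt_eqF //; have := tau_gt; lra.
apply: (mulfI h0). rewrite mulfV //. have := tau2. rewrite expr2. move=> h. by rewrite mulrBr mulr1 h; ring.
Qed.

Definition emb (x : zt) : R := x.1%:~R + x.2%:~R * tau.
Lemma emb_add x y : emb (addZ x y) = emb x + emb y.
Proof. rewrite /emb /addZ /= !intrD; ring. Qed.
Lemma emb_mul x y : emb (mulZ x y) = emb x * emb y.
Proof.
case: x => a b; case: y => c d.
rewrite /emb /mulZ /= !intrD !intrM. have h := tau2. rewrite expr2 in h.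
apply/eqP; rewrite -subr_eq0; apply/eqP.
transitivity (b%:~R * d%:~R * (tau + 1 - tau * tau)); first ring.
by rewrite h subrr mulr0.
Qed.

Lemma spatials_emb : spatials R = map (map emb) spZ.
Proof.
rewrite /spatials /spZ /spatial1 /spatial2 /spatial3 /spatial1Z /spatial2Z /spatial3Z /signs /signsZ /=.
rewrite tauV.
do !congr (_ :: _); rewrite /emb /=; ring.
Qed.

Lemma nth_mapd (T U : Type) (f : T -> U) x0 y0 (s : seq T) n :
  f x0 = y0 -> nth y0 (map f s) n = f (nth x0 s n).
Proof. move=> h; elim: s n => [|x s IH] [|n] //=. Qed.

Lemma emb0 : emb z0 = 0. Proof. by rewrite /emb /= mul0r addr0. Qed.

Local Notation r := (Num.sqrt (2 * tau)).
Lemma r2 : r * r = 2 * tau.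
Proof. rewrite -expr2 sqr_sqrtr //; have := tau_gt; lra. Qed.
Lemma r_gt0 : 0 < r.
Proof. rewrite sqrtr_gt0; have := tau_gt; lra. Qed.

Lemma mink_normal (i j : 'I_120) :
  mink (normal R i) (normal R j) = - (2 * tau) + emb (dZ i j).
Proof.
rewrite /mink !big_ord_recl big_ord0 /normal /=.
rewrite spatials_emb !(@nth_mapd _ _ (map emb) [::] [::] _ _ erefl) !(nth_mapd _ _ emb0) /dZ /dZt /dotZ.
rewrite !emb_add !emb_mul mulNr r2 /bump /=. ring.
Qed.

Ltac mexp := rewrite /mink !big_ord_recl !big_ord0 /=.

Lemma minkC (x y : 'I_5 -> R) : mink x y = mink y x.
Proof. mexp; ring. Qed.
Lemma minkD (u w z : 'I_5 -> R) : mink (fun k => u k + w k) z = mink u z + mink w z.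
Proof. mexp; ring. Qed.
Lemma minkZ (a : R) (u z : 'I_5 -> R) : mink (fun k => a * u k) z = a * mink u z.
Proof. mexp; ring. Qed.

Definition e0 : 'I_5 -> R := fun k => if k == ord0 then 1 else 0.
Lemma mink_e0n i : mink e0 (normal R i) = - r.
Proof. mexp. rewrite /e0 /normal /=. ring. Qed.
Lemma mink_e0e0 : mink e0 e0 = - 1.
Proof. mexp. rewrite /e0 /=. ring. Qed.

Lemma timelike_aux (x0 x1 x2 x3 x4 v0 v1 v2 v3 v4 : R) :
  - x0 * x0 + (x1 * x1 + (x2 * x2 + (x3 * x3 + (x4 * x4 + 0)))) = -1 -> 0 < x0 ->
  - x0 * v0 + (x1 * v1 + (x2 * v2 + (x3 * v3 + (x4 * v4 + 0)))) = 0 -> 0 < v0 ->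
  0 < - v0 * v0 + (v1 * v1 + (v2 * v2 + (v3 * v3 + (v4 * v4 + 0)))).
Proof.
move=> hx hx0 hxv hv0.
set X := x1 * x1 + (x2 * x2 + (x3 * x3 + (x4 * x4 + 0))) in hx.
set V := v1 * v1 + (v2 * v2 + (v3 * v3 + (v4 * v4 + 0))).
set P := x1 * v1 + (x2 * v2 + (x3 * v3 + (x4 * v4 + 0))) in hxv.
have cs : P * P <= X * V.
  have -> : X * V = P * P + ((x1*v2 - x2*v1)^+2 + (x1*v3 - x3*v1)^+2 + (x1*v4 - x4*v1)^+2
     + (x2*v3 - x3*v2)^+2 + (x2*v4 - x4*v2)^+2 + (x3*v4 - x4*v3)^+2) by rewrite /X /V /P; ring.
  by rewrite lerDl; rewrite !addr_ge0 // sqr_ge0.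
have hV : 0 <= V by rewrite /V; nra.
have hP : P = x0 * v0 by lra.
rewrite hP in cs.
have hX : X = x0 * x0 - 1 by lra.
rewrite hX in cs.
have ha : 0 < x0 * x0 by apply: mulr_gt0.
have hw : 0 < v0 * v0 by apply: mulr_gt0.
have e : x0 * v0 * (x0 * v0) = (x0 * x0) * (v0 * v0) by ring.
rewrite e in cs.
rewrite mulNr.
move: cs ha hw hV. move: (x0 * x0) (v0 * v0) => a w.
move=> cs ha hw hV.
rewrite ltNge; apply/negP => hle.
have h1 : 0 <= a * (w - V) by apply: mulr_ge0; lra.
have hV0 : V <= 0 by nra.
have hV1 : V = 0 by lra.
rewrite hV1 in cs. nra.
Qed.

Lemma timelike (x v : 'I_5 -> R) : inH4 x -> mink x v = 0 -> 0 < v ord0 -> 0 < mink v v.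
Proof.
case=> hx hx0; move: hx; rewrite /mink !big_ord_recl !big_ord0 /= => hx hxv hv0.
exact: (timelike_aux hx hx0 hxv hv0).
Qed.

Lemma emb_vals (z : zt) : z \in vals' -> emb z <= 2 * tau /\ (z != (0,2) -> emb z <= 2).
Proof.
have := tau_gt; have := tau_lt => h1 h2.
rewrite !inE => /orP[/eqP->|/orP[/eqP->|/orP[/eqP->|/orP[/eqP->|/orP[/eqP->|/orP[/eqP->|/orP[/eqP->|/eqP->]]]]]]];
 rewrite /emb /=; split => //; lra.
Qed.

Lemma D_le (i k : 'I_120) : emb (dZ i k) <= 4 /\ (k != i -> emb (dZ i k) <= 2 * tau).
Proof.
have := tau_lt => h2.
case: (eqVneq i k) => [->|ne].
  by rewrite dZdiag /emb /=; split => //; lra.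
have [h _] := emb_vals (dZoff ne).
split => // ; lra.
Qed.

Lemma emb4 : emb (4,0) = 4.
Proof. by rewrite /emb /= mul0r addr0. Qed.

Lemma normal0 (i : 'I_120) : normal R i ord0 = r.
Proof. by rewrite /normal /=. Qed.

Lemma Dsym (i j : 'I_120) : emb (dZ j i) = emb (dZ i j).
Proof.
have := mink_normal i j; rewrite minkC mink_normal => h.
by apply: (addrI (- (2 * tau))).
Qed.

Lemma disj (i j : 'I_120) : emb (dZ i j) <= 2 -> disjoint_walls R i j.
Proof.
move=> hd [x [[[hH _] hi] [_ hj]]].
pose v := fun k => normal R i k + normal R j k.
have hxv : mink x v = 0 by rewrite minkC /v minkD !(minkC _ x) hi hj addr0.
have hv0 : 0 < v ord0 by rewrite /v !normal0; have := r_gt0; lra.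
have := timelike hH hxv hv0.
rewrite /v minkD (minkC (normal R i)) (minkC (normal R j)) !minkD !mink_normal !dZdiag Dsym.
rewrite emb4; have := tau_gt; lra.
Qed.

Lemma Dsum (i j k : 'I_120) : i != j -> emb (dZ i k) + emb (dZ j k) <= 4 + 2 * tau.
Proof.
move=> ne; have := tau_lt => ht.
have [a1 a2] := D_le i k; have [b1 b2] := D_le j k.
case: (eqVneq k i) => [ek|nki].
  have : k != j by rewrite ek.
  move/b2 => h; lra.
case: (eqVneq k j) => [ek|nkj].
  move: (a2 nki) => h; lra.
move: (a2 nki) (b2 nkj) => h h'; lra.
Qed.

Lemma meet (i j : 'I_120) : i != j -> dZ i j = (0,2) ->
  exists x : 'I_5 -> R, in_wall i x /\ in_wall j x.
Proof.
move=> ne hij.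
have hD : emb (dZ i j) = 2 * tau by rewrite hij /emb /=; ring.
have hDj : emb (dZ j i) = 2 * tau by rewrite Dsym.
have ht1 := tau_gt; have ht2 := tau_lt; have hr := r_gt0.
pose c := 4 - 2 * tau.
have hc : 0 < c by rewrite /c; lra.
pose mu := r / c.
have hmu : 0 < mu by rewrite /mu divr_gt0.
pose y := fun k => e0 k + mu * (normal R i k + normal R j k).
have my z : mink y z = mink e0 z + mu * (mink (normal R i) z + mink (normal R j) z).
  by rewrite /y minkD minkZ minkD.
have yN k : mink y (normal R k) = - r + mu * (- (2 * tau) + emb (dZ i k) + (- (2 * tau) + emb (dZ j k))).
  by rewrite my mink_e0n !mink_normal.
have ye0 : mink y e0 = -1 - 2 * mu * r.
  by rewrite my mink_e0e0 !(minkC (normal R _) e0) !mink_e0n; ring.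
have yy : mink y y = -1 - 4 * mu * r + 2 * mu * mu * c.
  rewrite my (minkC e0) (minkC (normal R i)) (minkC (normal R j)) ye0 !yN.
  by rewrite !dZdiag emb4 hD hDj /c; ring.
pose q := - mink y y.
have hq : 0 < q.
  rewrite /q yy /mu.
  have -> : - (-1 - 4 * (r / c) * r + 2 * (r / c) * (r / c) * c) = 1 + 2 * (r * r) / c.
    by field; rewrite /c; apply/eqP; lra.
  have : 0 < 2 * (r * r) / c by apply: divr_gt0 => //; nra.
  lra.
pose lam := (Num.sqrt q)^-1.
have hsq : 0 < Num.sqrt q by rewrite sqrtr_gt0.
have hlam : 0 < lam by rewrite /lam invr_gt0.
have hlam2 : lam * lam * q = 1.
  rewrite /lam -invrM ?unitfE ?gt_eqF // -expr2 sqr_sqrtr ?mulVf ?gt_eqF //; lra.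
pose x := fun k => lam * y k.
have mx z : mink x z = lam * mink y z by rewrite /x minkZ.
have key k : mink y (normal R k) = r * (emb (dZ i k) + emb (dZ j k) - (4 + 2 * tau)) / c.
  by rewrite yN /mu /c; field; apply/eqP; lra.
have inPx : inP x.
  split.
    split.
      have -> : mink x x = lam * lam * (- q) by rewrite mx minkC mx /q opprK mulrA.
      by rewrite mulrN hlam2.
    rewrite /x /y /e0 !normal0 /=. apply: mulr_gt0 => //. nra.
  move=> k; rewrite mx key.
  have hs := Dsum k ne.
  have h : r * (emb (dZ i k) + emb (dZ j k) - (4 + 2 * tau)) / c <= 0.
    by rewrite ler_pdivrMr // mul0r; nra.
  apply: mulr_ge0_le0 => //; lra.
exists x; split; split => //.
  by rewrite mx key dZdiag emb4 hDj; ring.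
by rewrite mx key dZdiag emb4 hD; ring.
Qed.
End Real.

From mathcomp Require Import zify.

Lemma mulZC x y : mulZ x y = mulZ y x.
Proof. case: x => a b; case: y => c d; rewrite /mulZ /=; congr pair; ring. Qed.

Lemma adjO_sym (i j : 'I_120) : adjO i j = adjO j i.
Proof. by rewrite /adjO /dZ /dZt /dotZ !(mulZC (nth z0 (nth [::] spZ j) _)). Qed.

Lemma adjO_irr (i : 'I_120) : adjO i i = false.
Proof. by rewrite /adjO dZdiag. Qed.

Lemma card24 : #|[set i : 'I_120 | (i < 24)%N]| = 24%N.
Proof.
rewrite cardsE cardE enum_filter size_filter.
have := count_map val (fun n => (n < 24)%N) (enum 'I_120); rewrite val_enum_ord => <-.
by [].
Qed.

Theorem proposition3p1 (R : realType) :
  (exists S : {set 'I_120}, pairwise_disjoint_walls R S /\ #|S| = 24%N) /\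
  (forall S : {set 'I_120}, pairwise_disjoint_walls R S -> (#|S| <= 24)%N).
Proof.
split.
  exists [set i : 'I_120 | (i < 24)%N]; split; last exact: card24.
  move=> i j; rewrite !inE => hi hj ne; apply: disj.
  have hv := dZoff ne.
  have [_ h] := emb_vals R hv; apply: h; exact: chk24O hi hj ne.
move=> S hS.
have indep i j : i \in S -> j \in S -> ~~ adjO i j.
  move=> hi hj; case: (eqVneq i j) => [->|ne]; first by rewrite adjO_irr.
  apply/negP => a; apply: (hS i j hi hj ne); exact: meet ne (eqP a).
have loc v : (#|[set s in S | adjO v s]| <= 3)%N.
  rewrite leqNgt; apply/negP => h4.
  set X := [set s in S | adjO v s] in h4.
  have sz : size (enum X) = #|X| by rewrite cardE.
  have u := enum_uniq X.
  have inX k : (k < 4)%N -> nth v (enum X) k \in X.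
    by move=> hk; rewrite -mem_enum mem_nth // sz; lia.
  have hX k : (k < 4)%N -> (nth v (enum X) k \in S) && adjO v (nth v (enum X) k).
    by move=> hk; have := inX k hk; rewrite inE.
  have nq k l : (k < 4)%N -> (l < 4)%N -> k != l -> nth v (enum X) k != nth v (enum X) l.
    by move=> hk hl kl; rewrite nth_uniq // sz; lia.
  move: (hX 0%N erefl) (hX 1%N erefl) (hX 2%N erefl) (hX 3%N erefl) => /andP[s0 a0] /andP[s1 a1] /andP[s2 a2] /andP[s3 a3].
  have := F4 a0 a1 a2 a3.
  have -> : uniq [:: nth v (enum X) 0; nth v (enum X) 1; nth v (enum X) 2; nth v (enum X) 3].
    rewrite /= !inE !negb_or !nq //.
  move=> /(_ isT) h.
  by move: h; rewrite (negbTE (indep _ _ s0 s1)) (negbTE (indep _ _ s0 s2)) (negbTE (indep _ _ s0 s3))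
     (negbTE (indep _ _ s1 s2)) (negbTE (indep _ _ s1 s3)) (negbTE (indep _ _ s2 s3)).
have cardP v : #|[set s in S | adjO v s]| = (\sum_(s in S) (adjO v s : nat))%N.
  by rewrite -sum1_card big_mkcond [RHS]big_mkcond /=; apply: eq_bigr => s _; rewrite inE; case: (s \in S); case: adjO.
have e1 : (\sum_(v : 'I_120) #|[set s in S | adjO v s]| = 12 * #|S|)%N.
  under eq_bigr do rewrite cardP.
  rewrite exchange_big /= (eq_bigr (fun=> 12%N)); first by rewrite sum_nat_const mulnC.
  move=> s _; transitivity #|[set v | adjO s v]|; last exact: degO.
  rewrite -sum1dep_card [RHS]big_mkcond /=; apply: eq_bigr => u _.
  by rewrite adjO_sym; case: adjO.
have e2 : (\sum_(v : 'I_120) #|[set s in S | adjO v s]| <= 3 * (120 - #|S|))%N.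
  rewrite (bigID (fun v => v \in S)) /=.
  rewrite big1 ?add0n; last first.
    move=> v vS; apply/eqP; rewrite cards_eq0; apply/eqP/setP => s; rewrite !inE.
    by case sS: (s \in S) => //=; apply/negbTE/indep.
  have -> : (120 - #|S| = #|~: S|)%N by have := cardsC S; rewrite card_ord; lia.
  rewrite -sum1_card big_distrr /= muln1.
  apply: (@leq_trans (\sum_(i < 120 | i \notin S) 3)%N); first by apply: leq_sum => v _; rewrite loc.
  by rewrite (eq_bigl (fun i => i \in ~: S)) // => i; rewrite inE.
have := max_card S; rewrite card_ord => hmax.
move: e1 e2 => ->; lia.
Qed.
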